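(* If $T$ is a subcubic tree, then $\gamma(T)=\gamma_{e,f}^*(T)$ if and only if $T$ is $K_{1,3}$.
   Context: All graphs are finite, simple and undirected; subcubic means maximum degree at most $3$; $K_{1,3}$ is the star with three leaves. $\gamma(G)$ is the domination number of $G$ (minimum size of a set $D$ such that every vertex not in $D$ has a neighbor in $D$). The fractional porous exponential domination number $\gamma_{e,f}^*(G)$ is the optimum value of the linear program: minimize $\sum_{u\in V(G)}x(u)$ subject to $\sum_{u\in V(G)}\left(\frac12\right)^{\mathrm{dist}_G(u,v)-1}x(u)\ge 1$ for every $v\in V(G)$ and $x\ge 0$, where $\mathrm{dist}_G$ is the usual distance and $\left(\frac12\right)^\infty=0$. *)

(* Defs.v *)
From HB Require Import structures.
From mathcomp Require Import all_boot all_order all_algebra.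
Set Implicit Arguments. Unset Strict Implicit. Unset Printing Implicit Defensive.
Import Order.TTheory GRing.Theory Num.Theory.

Definition simple_graph (T : finType) (e : rel T) : Prop :=
  symmetric e /\ irreflexive e.

Definition subcubic (T : finType) (e : rel T) : Prop :=
  forall x : T, #|[set y | e x y]| <= 3.

Definition connected_graph (T : finType) (e : rel T) : Prop :=
  forall x y : T, connect e x y.

Definition acyclic (T : finType) (e : rel T) : Prop :=
  forall c : seq T, uniq c -> 2 < size c -> ~~ cycle e c.

Definition is_tree (T : finType) (e : rel T) : Prop :=
  0 < #|T| /\ connected_graph e /\ acyclic e.

(* the graph is (isomorphic to) K_{1,3}: 4 vertices, a centre c adjacent
   to exactly the other three, no other edges *)
Definition is_K13 (T : finType) (e : rel T) : Prop :=
  #|T| = 4 /\ exists c : T, forall x y : T, e x y = ((x == c) != (y == c)).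

Definition dominating (T : finType) (e : rel T) (D : {set T}) : bool :=
  [forall x, (x \in D) || [exists y in D, e x y]].

Definition domination_number (T : finType) (e : rel T) : nat :=
  #|[arg min_(D < [set: T] | dominating e D) #|D|]|.

Fixpoint walk (T : finType) (e : rel T) (k : nat) (x y : T) : bool :=
  if k is k'.+1 then [exists z, e x z && walk e k' z y] else x == y.

(* graph distance: Some d if y is reachable from x (shortest walk length d),
   None (= infinity) otherwise; shortest walks have length < #|T| *)
Definition dist (T : finType) (e : rel T) (x y : T) : option nat :=
  let k := find (fun k => walk e k x y) (iota 0 #|T|) in
  if (k < #|T|)%N then Some k else None.

Local Open Scope ring_scope.

Definition pe_weight (R : realFieldType) (T : finType) (e : rel T) (u v : T) : R :=
  match dist e u v with
  | Some d => (2^-1 : R) ^ (d%:Z - 1)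
  | None => 0
  end.

Definition fpe_feasible (R : realFieldType) (T : finType) (e : rel T) (x : T -> R) : Prop :=
  (forall u, 0 <= x u) /\
  (forall v, 1 <= \sum_(u : T) pe_weight R e u v * x u).

Definition is_fpe_domination_number (R : realFieldType) (T : finType) (e : rel T) (r : R) : Prop :=
  (exists x : T -> R, fpe_feasible e x /\ \sum_(u : T) x u = r) /\
  (forall x : T -> R, fpe_feasible e x -> r <= \sum_(u : T) x u).

(* Main.v *)
Require Import Defs.
From HB Require Import structures.
From mathcomp Require Import all_boot all_order all_algebra.
From mathcomp Require Import ring lra.
Import Order.TTheory GRing.Theory Num.Theory.
Local Open Scope ring_scope.

Lemma pw (R : realFieldType) (d : nat) : (2^-1 : R) ^ (d%:Z - 1) = 2 * (2^-1)^+d.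
Proof.
have u : (2^-1 : R) \is a GRing.unit by rewrite unitfE invr_eq0 pnatr_eq0.
have := exprzDr u (d%:Z - 1) 1. rewrite subrK expr1z exprnP => ->.
rewrite mulrCA divff ?mulr1 // pnatr_eq0 //.
Qed.

Section L.
Variables (R : realFieldType) (T : finType) (e : rel T).

Lemma dist_walk u v d : dist e u v = Some d -> walk e d u v /\ (d < #|T|)%N.
Proof.
rewrite /dist; case: ifP => // lt [<-]; split=> //.
have hs : has (fun k => walk e k u v) (iota 0 #|T|) by rewrite has_find size_iota.
by have := nth_find 0 hs; rewrite nth_iota ?size_iota // add0n.
Qed.

Lemma walk_dist u v k : walk e k u v -> (k < #|T|)%N ->
  exists2 d, dist e u v = Some d & (d <= k)%N.
Proof.
move=> hw hk; rewrite /dist.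
set p := (fun k => walk e k u v).
have hf : (find p (iota 0 #|T|) <= k)%N.
  rewrite leqNgt; apply/negP => /(before_find 0).
  by rewrite nth_iota // add0n /p hw.
exists (find p (iota 0 #|T|)) => //.
by rewrite (leq_ltn_trans hf hk).
Qed.

Lemma walk1 u v : walk e 1 u v = e u v.
Proof.
apply/idP/idP => /=.
  by case/existsP => z /andP[h /eqP <-].
by move=> h; apply/existsP; exists v; rewrite h eqxx.
Qed.

Let w u v := pe_weight R e u v.

Lemma half_ge0 : 0 <= (2^-1 : R). Proof. by rewrite invr_ge0 ler0n. Qed.
Lemma half_le1 : (2^-1 : R) <= 1. Proof. by rewrite invf_le1 ?ler1n ?ltr0n. Qed.

Lemma w_ge0 u v : 0 <= w u v.
Proof.
rewrite /w /pe_weight; case: (dist e u v) => // d.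
by rewrite pw mulr_ge0 ?ler0n ?exprn_ge0 ?half_ge0.
Qed.

Lemma w_walk u v k : walk e k u v -> (k < #|T|)%N -> 2 * (2^-1)^+k <= w u v.
Proof.
move=> hw hk; case: (walk_dist _ _ _ hw hk) => d hd hdk.
rewrite /w /pe_weight hd pw ler_pM2l ?ltr0n //.
by apply: ler_wiXn2l; rewrite ?half_ge0 ?half_le1.
Qed.

Lemma w_le1 u v : u != v -> w u v <= 1.
Proof.
move=> huv; rewrite /w /pe_weight; case hd: (dist e u v) => [d|]; last by rewrite ler01.
case: (dist_walk _ _ _ hd) => hw _; case: d hw {hd} => [|d] hw.
  by move: hw => /= /eqP h; rewrite h eqxx in huv.
rewrite pw exprS mulrA divff ?mul1r ?pnatr_eq0 //.
by apply: exprn_ile1; rewrite ?half_ge0 ?half_le1.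
Qed.

Lemma w_lehalf u v : u != v -> ~~ e u v -> w u v <= 2^-1.
Proof.
move=> huv he; rewrite /w /pe_weight; case hd: (dist e u v) => [d|]; last by rewrite half_ge0.
case: (dist_walk _ _ _ hd) => hw _; case: d hw {hd} => [|[|d]] hw.
- by move: hw => /= /eqP h; rewrite h eqxx in huv.
- by rewrite walk1 (negbTE he) in hw.
rewrite pw !exprS mulrA divff ?mul1r ?pnatr_eq0 //.
rewrite -[X in _ <= X]mulr1 ler_pM2l ?invr_gt0 ?ltr0n //.
by apply: exprn_ile1; rewrite ?half_ge0 ?half_le1.
Qed.

Lemma w_le2 u v : w u v <= 2.
Proof.
rewrite /w /pe_weight; case hd: (dist e u v) => [d|]; last by rewrite ler0n.
rewrite pw -[X in _ <= X]mulr1 ler_pM2l ?ltr0n //.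
by apply: exprn_ile1; rewrite ?half_ge0 ?half_le1.
Qed.

Lemma path_walk x p : path e x p -> walk e (size p) x (last x p).
Proof.
elim: p x => [|y p IH] x /=; first by rewrite eqxx.
case/andP => hxy hp; apply/existsP; exists y; rewrite hxy; exact: IH.
Qed.

Lemma connect_walk u v : connect e u v -> exists2 k, walk e k u v & (k < #|T|)%N.
Proof.
case/connectP => p hp ->; case: (shortenP hp) => p' hp' uq _.
exists (size p'); first exact: path_walk.
have := max_card (mem (u :: p')).
by rewrite (card_uniqP uq).
Qed.

End L.

Section M.
Variables (R : realFieldType) (T : finType) (e : rel T).
Hypotheses (sym : symmetric e) (irr : irreflexive e) (conn : connected_graph e).
Let w u v := pe_weight R e u v.

Lemma sum_split (D : {set T}) (c : R) v :
  \sum_u w u v * (if u \in D then c else 0) = (\sum_(u in D) w u v) * c.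
Proof.
rewrite mulr_suml [RHS]big_mkcond /=; apply: eq_bigr => u _.
by case: (u \in D); rewrite ?mulr0.
Qed.

Lemma ge2_contra (D : {set T}) : dominating e D -> (1 < #|D|)%N ->
  exists x : T -> R, fpe_feasible e x /\ \sum_u x u < #|D|%:R.
Proof.
move=> /forallP hdom hD.
have hn : (1 < #|T|)%N by apply: leq_trans hD (max_card _).
pose m : R := 1 + (2^-1)^+#|T|.
have m0 : 0 < m by rewrite ltr_wpDr ?exprn_ge0 ?half_ge0.
have m1 : 1 < m by rewrite ltrDl exprn_gt0 // invr_gt0 ltr0n.
have m2 : m <= 2 by rewrite [2]mulr2n lerD2l exprn_ile1 ?half_ge0 ?half_le1.
exists (fun u => if u \in D then m^-1 else 0); split; first split.
- by move=> u; case: (u \in D); rewrite ?invr_ge0 ?(ltW m0).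
- move=> v; rewrite sum_split ler_pdivlMr // mul1r.
  case hv: (v \in D).
    rewrite (bigD1 v) //=; apply: le_trans m2 _.
    rewrite ler_wpDr ?sumr_ge0 // => [u _|]; first exact: w_ge0.
    by have := w_walk R T e v v 0 (eqxx v) (leq_ltn_trans (leq0n 1) hn); rewrite expr0 mulr1.
  have := hdom v; rewrite hv /= => /existsP [z /andP[hz hvz]].
  have : (0 < #|D :\ z|)%N by rewrite (cardsD1 z D) hz in hD.
  case/card_gt0P => u'; rewrite in_setD1 => /andP[hu'z hu'].
  rewrite (bigD1 z) //= (bigD1 u') /=; last by rewrite hu' hu'z.
  rewrite addrA; apply: le_trans (_ : w z v + w u' v <= _); last first.
    by rewrite ler_wpDr ?sumr_ge0 // => u _; exact: w_ge0.
  apply: lerD.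
    have := w_walk R T e z v 1; rewrite walk1 sym hvz expr1.
    by rewrite divff ?pnatr_eq0 // => /(_ isT hn).
  case: (connect_walk T e u' v (conn u' v)) => k hk hkn.
  apply: le_trans (w_walk R T e _ _ _ hk hkn).
  rewrite -[X in X <= _]mul1r ler_pM ?ler1n ?exprn_ge0 ?half_ge0 //.
  by apply: ler_wiXn2l; rewrite ?half_ge0 ?half_le1 // ltnW.
- rewrite -big_mkcond /= sumr_const -(mulr_natr m^-1).
  rewrite mulrC ltr_pdivrMr // ltr_pMr // ltr0n; exact: ltnW.
Qed.
End M.

Section S.
Variables (R : realFieldType) (T : finType) (e : rel T).
Hypotheses (sym : symmetric e) (irr : irreflexive e).
Let w u v := pe_weight R e u v.

Lemma wvv v : 2 <= w v v.
Proof.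
have hn : (0 < #|T|)%N by apply/card_gt0P; exists v.
by have := w_walk R T e v v 0 (eqxx v) hn; rewrite expr0 mulr1.
Qed.

Lemma small_contra c : (forall x, (x == c) || e x c) -> (#|T| <= 3)%N ->
  exists x : T -> R, fpe_feasible e x /\ \sum_u x u < 1.
Proof.
move=> hdom hn3.
case: (eqVneq #|T| 1%N) => hn1.
  exists (fun _ => 2^-1); split; first split.
  - by move=> _; exact: half_ge0.
  - move=> v; rewrite -mulr_suml ler_pdivlMr ?ltr0n // mul1r.
    rewrite (bigD1 v) //=; apply: le_trans (wvv v) _.
    by rewrite ler_wpDr ?sumr_ge0 // => u _; exact: w_ge0.
  by rewrite sumr_const hn1 invf_lt1 ?ltr0n // ltr1n.
have hn2 : (1 < #|T|)%N.
  by move: hn1; rewrite ltn_neqAle eq_sym => -> /=; apply/card_gt0P; exists c.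
have hw2 : forall u v, 2^-1 <= w u v.
  move=> u v; case: (eqVneq u v) => [->|huv].
    by apply: le_trans (wvv v); apply: le_trans (half_le1 R) _; rewrite ler1n.
  have hn2' : (1 < #|T|)%N.
    have := max_card (mem [:: u; v]).
    by rewrite (card_uniqP _) //= inE huv.
  case: (boolP (e u v)) => heuv.
    have := w_walk R T e u v 1; rewrite walk1 heuv expr1 divff ?pnatr_eq0 //.
    by move=> /(_ isT hn2'); apply: le_trans; rewrite half_le1.
  have huc : u != c.
    apply/negP => /eqP huc; move: (hdom v); rewrite -huc eq_sym (negbTE huv) /=.
    by rewrite sym (negbTE heuv).
  have hvc : v != c.
    apply/negP => /eqP hvc; move: (hdom u); rewrite -hvc (negbTE huv) /=.
    by rewrite (negbTE heuv).
  have hn3' : (2 < #|T|)%N.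
    have := max_card (mem [:: u; v; c]).
    by rewrite (card_uniqP _) //= !inE negb_or huv huc hvc.
  have hw : walk e 2 u v.
    have h1 : walk e 1 c v by rewrite walk1 sym; move: (hdom v); rewrite (negbTE hvc).
    apply/existsP; exists c; move: h1 => /= ->; rewrite andbT.
    by move: (hdom u); rewrite (negbTE huc).
  have := w_walk R T e u v 2 hw hn3'.
  by rewrite expr2 mulrA divff ?mul1r // pnatr_eq0.
pose K : R := (#|T|%:R + 4) / 2.
have K0 : 0 < K by rewrite divr_gt0 ?ltr0n // ltr_wpDl ?ler0n ?ltr0n.
have hn3r : (#|T|%:R : R) <= 3 by rewrite ler_nat.
exists (fun _ => K^-1); split; first split.
- by move=> _; rewrite invr_ge0 ltW.
- move=> v; rewrite -mulr_suml ler_pdivlMr // mul1r.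
  have [z hzv hez] : exists2 z, z != v & e z v.
    case: (eqVneq v c) => [->|hvc].
      have : (0 < #|predC1 c|)%N by rewrite cardC1 -ltnS prednK // (ltn_trans _ hn2).
      case/card_gt0P => z; rewrite !inE => hzc.
      by exists z => //; move: (hdom z); rewrite (negbTE hzc).
    exists c; first by rewrite eq_sym.
    by move: (hdom v); rewrite (negbTE hvc) sym.
  have -> : \sum_u w u v = \sum_(u : T) 2^-1 + \sum_u (w u v - 2^-1).
    by rewrite -big_split /=; apply: eq_bigr => u _; rewrite addrC subrK.
  rewrite sumr_const (bigD1 v) //= (bigD1 z) //=.
  have h1 := wvv v.
  have h2 : 1 <= w z v.
    have := w_walk R T e z v 1; rewrite walk1 hez expr1 divff ?pnatr_eq0 //.
    by move=> /(_ isT hn2).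
  have h3 : 0 <= \sum_(i | (i != v) && (i != z)) (w i v - 2^-1).
    by apply: sumr_ge0 => u _; rewrite subr_ge0.
  rewrite /K -mulr_natl. lra.
rewrite sumr_const -mulr_natl ltr_pdivrMr // mul1r /K. lra.
Qed.
End S.

Theorem mainTheorem5 (R : realFieldType) (T : finType) (e : rel T) :
  simple_graph e -> is_tree e -> subcubic e ->
  (is_fpe_domination_number e ((domination_number e)%:R : R) <-> is_K13 e).
Proof.
move=> [sym irr] [n0 [conn acyc]] hsub.
have domT : dominating e [set: T] by apply/forallP => x; rewrite in_setT.
have [D [hD [hmin hgam]]] : exists D, dominating e D /\
    (forall D', dominating e D' -> (#|D| <= #|D'|)%N) /\ domination_number e = #|D|.
  rewrite /domination_number; case: (arg_minnP (fun D : {set T} => #|D|) domT).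
  by move=> D hD hmin; exists D.
have pos : forall D', dominating e D' -> (0 < #|D'|)%N.
  move=> D' /forallP hd; case/card_gt0P: n0 => x _; apply/card_gt0P.
  case/orP: (hd x) => [hx|/existsP [y /andP[hy _]]]; by [exists x | exists y].
rewrite hgam; split.
- move=> [_ hlow].
  case: (eqVneq #|D| 1%N) => hD1; last first.
    have hD2 : (1 < #|D|)%N by rewrite ltn_neqAle eq_sym hD1 pos.
    case: (ge2_contra R T e sym conn D hD hD2) => x [hf hlt].
    by have := hlow x hf; rewrite leNgt hlt.
  have /cards1P [c hDc] : #|D| == 1%N by rewrite hD1.
  rewrite hDc in hD.
  have hdom : forall x, (x == c) || e x c.
    move=> x; move/forallP: hD => /(_ x); rewrite in_set1.
    case/orP => [->//|/existsP [y /andP[]]]; rewrite in_set1 => /eqP -> ->.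
    by rewrite orbT.
  have hn4 : (#|T| <= 4)%N.
    have : (#|predC1 c| <= #|[set y | e c y]|)%N.
      apply: subset_leq_card; apply/subsetP => y; rewrite !inE => hy.
      by move: (hdom y); rewrite (negbTE hy) /= sym.
    rewrite cardC1 => h; have := leq_trans h (hsub c).
    by case: #|T|.
  case: (leqP #|T| 3) => hn3.
    case: (small_contra R T e sym c hdom hn3) => x [hf hlt].
    by have := hlow x hf; rewrite hD1 leNgt hlt.
  split; first by apply/eqP; rewrite eqn_leq hn4 hn3.
  exists c => x y.
  case: (eqVneq x c) => [->|hxc]; case: (eqVneq y c) => [->|hyc] //=.
  + by move: (hdom y); rewrite (negbTE hyc) sym.
  + by move: (hdom x); rewrite (negbTE hxc).
  case: (eqVneq x y) => [->|hxy]; first by rewrite irr.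
  apply/negbTE/negP => hexy.
  have := acyc [:: c; x; y].
  rewrite /= !inE negb_or eq_sym hxc eq_sym hyc hxy /= => /(_ isT isT).
  rewrite hexy andbT.
  move: (hdom x) (hdom y); rewrite (negbTE hxc) (negbTE hyc) /= sym => -> ->.
  by [].
- case=> hn4 [c hc].
  have hec : forall v, v != c -> e c v by move=> v hv; rewrite hc eqxx eq_sym (negbTE hv).
  have hnon : forall u v, u != c -> v != c -> e u v = false.
    by move=> u v hu hv; rewrite hc (negbTE hu) (negbTE hv).
  have hD1 : #|D| = 1%N.
    apply/eqP; rewrite eqn_leq pos // andbT.
    rewrite -(cards1 c); apply: hmin; apply/forallP => x; rewrite in_set1.
    case: (eqVneq x c) => //= hxc; apply/existsP; exists c.
    by rewrite in_set1 eqxx hc (negbTE hxc) eqxx.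
  rewrite hD1; split.
    exists (fun u => if u == c then 1 else 0); split; first split.
    + by move=> u; case: (u == c); rewrite ?ler01.
    + move=> v; rewrite (bigD1 c) //= eqxx mulr1.
      apply: le_trans (_ : pe_weight R e c v <= _); last first.
        rewrite ler_wpDr // sumr_ge0 // => u _.
        by case: (u == c); rewrite ?mulr1 ?mulr0 ?w_ge0.
      case: (eqVneq v c) => [->|hvc].
        by apply: le_trans (wvv R T e c); rewrite ler1n.
      have := w_walk R T e c v 1; rewrite walk1 hec // expr1 divff ?pnatr_eq0 //.
      by apply; rewrite // hn4.
    + rewrite (bigD1 c) //= eqxx big1 ?addr0 // => u /negbTE -> //.
  move=> x [hx0 hx].
  pose L := [set v | v != c].
  have cL : #|L| = 3%N by rewrite cardsE cardC1 hn4.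
  have hb : forall u, \sum_(v in L) pe_weight R e u v <= 3.
    move=> u; case: (eqVneq u c) => [->|huc].
      apply: le_trans (_ : \sum_(v in L) (1 : R) <= _); last by rewrite sumr_const cL.
      by apply: ler_sum => v; rewrite inE eq_sym; exact: w_le1.
    have huL : u \in L by rewrite inE.
    rewrite (bigD1 u) //=.
    have -> : \sum_(v in L | v != u) pe_weight R e u v =
              \sum_(v in L :\ u) pe_weight R e u v.
      by apply: eq_bigl => v; rewrite in_setD1 andbC.
    have cL' : #|L :\ u| = 2%N by have := cardsD1 u L; rewrite huL cL => -[].
    apply: le_trans (_ : 2 + \sum_(v in L :\ u) (2^-1 : R) <= _); last first.
      rewrite sumr_const cL'; lra.
    apply: lerD; first exact: w_le2.
    apply: ler_sum => v; rewrite in_setD1 inE => /andP[hvu hvc].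
    by apply: w_lehalf; rewrite ?hnon // eq_sym.
  have : 3 <= \sum_(v in L) \sum_u pe_weight R e u v * x u.
    apply: le_trans (_ : \sum_(v in L) (1 : R) <= _); first by rewrite sumr_const cL.
    by apply: ler_sum => v _; exact: hx.
  rewrite exchange_big /=.
  have : \sum_u \sum_(v in L) pe_weight R e u v * x u <= \sum_u 3 * x u.
    apply: ler_sum => u _; rewrite -mulr_suml ler_wpM2r //; exact: hb.
  rewrite -mulr_sumr => h1 h2; have := le_trans h2 h1; lra.
Qed.
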